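(* Let $\theta:\mathbb{R}\to\mathbb{R}$ be convex, $I\subset\mathbb{R}$, $T:I\to\mathbb{R}$ a map, $[a,b]=\overline{\mathrm{co}(T(I))}$ and $y_0\in(a,b)$. (a) Assume $T$ is nondecreasing and define $\underline S(y):=\inf\{x:T(x)\ge y\}$ and $\underline\psi(y):=\int_{y_0}^y\partial_-\theta(z-\underline S(z))\,dz$ for $y\in(a,b)$. Then $\underline\psi$ is continuous on $(a,b)$ and, for every $x\in I$ and all $y'\in[T(x-),T(x)]\cap[a,b]$, \[ -\underline\psi(y')+\theta(y'-x)=\inf_{y\in[a,b]}\big(-\underline\psi(y)+\theta(y-x)\big). \] (b) Assume $T$ is nonincreasing and define $\overline S(y):=\sup\{x:T(x)\ge y\}$ and $\overline\psi(y):=\int_{y_0}^y\partial_-\theta(z-\overline S(z))\,dz$ for $y\in(a,b)$. Then $\overline\psi$ is continuous on $(a,b)$ and, for every $x\in I$ and all $y'\in[T(x+),T(x)]\cap[a,b]$, \[ -\overline\psi(y')+\theta(y'-x)=\sup_{y\in[a,b]}\big(-\overline\psi(y)+\theta(y-x)\big). \]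
   Context: $\partial_-\theta$ denotes the left-hand derivative of $\theta$; $\mathrm{co}$ denotes convex hull; $T(x-)$ and $T(x+)$ denote left and right limits of the monotone map $T$ at $x$. *)

(* Defs.v *)
From HB Require Import structures.
From mathcomp Require Import all_boot all_order all_algebra.
From mathcomp Require Import all_classical all_reals all_analysis.
Set Implicit Arguments. Unset Strict Implicit. Unset Printing Implicit Defensive.
Import Order.TTheory GRing.Theory Num.Theory.
Import numFieldNormedType.Exports.
Local Open Scope classical_set_scope.
Local Open Scope ring_scope.

Section defs.
Variable R : realType.

Definition convex_fun (th : R -> R) : Prop :=
  forall x y t : R, 0 <= t -> t <= 1 ->
    th (t * x + (1 - t) * y) <= t * th x + (1 - t) * th y.

Definition convexR (C : set R) : Prop :=
  forall x y t : R, C x -> C y -> 0 <= t -> t <= 1 -> C (t * x + (1 - t) * y).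

Definition co (A : set R) : set R :=
  \bigcap_(C in [set C : set R | convexR C /\ A `<=` C]) C.

Definition lderiv (th : R -> R) (z : R) : R :=
  lim ((fun h : R => (th z - th (z - h)) / h) @ 0^'+).

(* left limit T(x-) of a nondecreasing map T : I -> R, as an extended real:
   sup { T x' : x' in I, x' < x } (= -oo if no such x'). *)
Definition Tleft (I : set R) (T : R -> R) (x : R) : \bar R :=
  ereal_sup [set (T x')%:E | x' in [set x' | I x' /\ x' < x]].

(* right limit T(x+) of a nonincreasing map T : I -> R:
   sup { T x' : x' in I, x' > x } (= -oo if no such x'). *)
Definition Tright (I : set R) (T : R -> R) (x : R) : \bar R :=
  ereal_sup [set (T x')%:E | x' in [set x' | I x' /\ x < x']].

Definition Slow (I : set R) (T : R -> R) (y : R) : R :=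
  inf [set x | I x /\ y <= T x].

Definition Shigh (I : set R) (T : R -> R) (y : R) : R :=
  sup [set x | I x /\ y <= T x].

Definition oint (f : R -> R) (y0 y : R) : \bar R :=
  if y0 <= y then (\int[@lebesgue_measure R]_(z in `[y0, y]) (f z)%:E)%E
  else (- \int[@lebesgue_measure R]_(z in `[y, y0]) (f z)%:E)%E.

Definition psi (th : R -> R) (S : R -> R) (y0 y : R) : \bar R :=
  oint (fun z => lderiv th (z - S z)) y0 y.

End defs.

(* Main.v *)
Require Import Defs.
From HB Require Import structures.
From mathcomp Require Import all_boot all_order all_algebra.
From mathcomp Require Import all_classical all_reals all_analysis.
From mathcomp Require Import lra ring.
Import Order.TTheory GRing.Theory Num.Theory.
Import numFieldNormedType.Exports.
Local Open Scope classical_set_scope.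
Local Open Scope ring_scope.
Section Cvx.
Variable R : realType.
Variable th : R -> R.
Hypothesis hth : convex_fun th.

Lemma div_le_div (A B p q : R) : 0 < p -> 0 < q -> A * q <= B * p -> A / p <= B / q.
Proof. by move=> p0 q0 H; rewrite ler_pdivrMr // mulrAC ler_pdivlMr. Qed.

Lemma cvx3 u v w : u < v -> v < w ->
  (th v - th u) * (w - v) <= (th w - th v) * (v - u).
Proof.
move=> uv vw.
have uw : u < w by apply: lt_trans uv vw.
have wu0 : 0 < w - u by rewrite subr_gt0.
have wun : w - u != 0 by rewrite gt_eqF.
set t := (w - v) / (w - u).
have t0 : 0 <= t by apply: divr_ge0; rewrite subr_ge0 ltW.
have t1 : t <= 1.
  by rewrite /t ler_pdivrMr // mul1r lerD2l lerN2 ltW.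
have := hth u w t t0 t1.
have -> : t * u + (1 - t) * w = v.
  by rewrite /t; field.
move=> H.
have H2 : th v * (w - u) <= (w - v) * th u + (v - u) * th w.
  have : th v * (w - u) <= (t * th u + (1 - t) * th w) * (w - u).
    by rewrite ler_pM2r.
  have -> : (t * th u + (1 - t) * th w) * (w - u) = (w - v) * th u + (v - u) * th w.
    by rewrite /t; field.
  by [].
rewrite -subr_ge0.
have -> : (th w - th v) * (v - u) - (th v - th u) * (w - v) =
  (w - v) * th u + (v - u) * th w - th v * (w - u) by ring.
by rewrite subr_ge0.
Qed.

Lemma slope12_23 u v w : u < v -> v < w ->
  (th v - th u) / (v - u) <= (th w - th v) / (w - v).
Proof.
move=> uv vw; apply: div_le_div; rewrite ?subr_gt0 //; exact: cvx3.
Qed.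

Lemma slope13_23 u v w : u < v -> v < w ->
  (th w - th u) / (w - u) <= (th w - th v) / (w - v).
Proof.
move=> uv vw; apply: div_le_div; rewrite ?subr_gt0 //; first by apply: lt_trans uv vw.
have := @cvx3 u v w uv vw; rewrite -subr_ge0 => H; rewrite -subr_ge0.
suff -> : (th w - th v) * (w - u) - (th w - th u) * (w - v) =
  (th w - th v) * (v - u) - (th v - th u) * (w - v) by [].
by ring.
Qed.

Definition sl (z h : R) := (th z - th (z - h)) / h.

Lemma sl_noninc z : {in `]0, +oo[ &, nonincreasing_fun (sl z)}.
Proof.
move=> h1 h2; rewrite !in_itv /= !andbT => h10 h20 h12.
have [->|h12'] := eqVneq h1 h2; first by [].
have lt12 : h1 < h2 by rewrite lt_neqAle h12' h12.
have := @slope13_23 (z - h2) (z - h1) z.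
rewrite /sl !subKr; apply; lra.
Qed.

Lemma sl_ub z h : 0 < h -> sl z h <= th (z + 1) - th z.
Proof.
move=> h0; have := @slope12_23 (z - h) z (z + 1).
rewrite /sl subKr addrAC subrr add0r divr1; apply; lra.
Qed.

Lemma sl_has_ub z : has_ubound (sl z @` `]0, +oo[).
Proof.
exists (th (z + 1) - th z) => ? [h]; rewrite /= in_itv /= andbT => h0 <-.
exact: sl_ub.
Qed.

Lemma lderivE z : lderiv th z = sup (sl z @` `]0, +oo[).
Proof.
rewrite /lderiv; apply: cvg_lim => //.
apply: (@nonincreasing_at_right_cvgr _ (sl z) 0 (BInfty _ false)) => //.
  exact: sl_noninc.
exact: sl_has_ub.
Qed.

Lemma lderiv_ge z h : 0 < h -> (th z - th (z - h)) / h <= lderiv th z.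
Proof.
move=> h0; rewrite lderivE; apply: ub_le_sup; first exact: sl_has_ub.
by exists h => //=; rewrite in_itv /= andbT.
Qed.

Lemma lderiv_le z w : z < w -> lderiv th z <= (th w - th z) / (w - z).
Proof.
move=> zw; rewrite lderivE; apply: ge_sup.
  by exists (sl z 1), 1 => //=; rewrite in_itv /= andbT.
move=> ? [h]; rewrite /= in_itv /= andbT => h0 <-.
have := @slope12_23 (z - h) z w; rewrite /sl subKr; apply; lra.
Qed.

Lemma lderiv_slope u v : u < v ->
  lderiv th u <= (th v - th u) / (v - u) <= lderiv th v.
Proof.
move=> uv; rewrite lderiv_le //=.
have := @lderiv_ge v (v - u); rewrite subKr; apply; lra.
Qed.

Lemma lderiv_mono u v : u <= v -> lderiv th u <= lderiv th v.
Proof.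
rewrite le_eqVlt => /predU1P[->//|uv].
by have /andP[H1 H2] := @lderiv_slope u v uv; apply: le_trans H1 H2.
Qed.

Lemma lderiv_diff u v : u <= v ->
  lderiv th u * (v - u) <= th v - th u <= lderiv th v * (v - u).
Proof.
rewrite le_eqVlt => /predU1P[->|uv]; first by rewrite !subrr !mulr0 lexx.
have vu0 : 0 < v - u by rewrite subr_gt0.
have /andP[H1 H2] := @lderiv_slope u v uv.
by rewrite -ler_pdivlMr // H1 /= -ler_pdivrMr.
Qed.

End Cvx.
Section Int.
Variable R : realType.
Local Notation mu := (@lebesgue_measure R).

Lemma bnd_of (f : R -> R) (A : set R) m M :
  (forall x, A x -> m <= f x <= M) -> [bounded f x | x in A].
Proof.
move=> H; exists (`|m| + `|M|); split; first by rewrite realE; apply/orP; left; rewrite addr_ge0.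
move=> r Mr x Ax; have /andP[h1 h2] := H x Ax.
have n1 := ler_norm M; have n2 := ler_norm (- m); rewrite normrN in n2.
apply: le_trans _ (ltW Mr); rewrite ler_norml; apply/andP; split; have := normr_ge0 m; have := normr_ge0 M; lra.
Qed.

Lemma mu_itv p q : p <= q -> mu `[p, q] = (q - p)%:E.
Proof.
move=> pq; rewrite lebesgue_measure_itv /= lte_fin.
by case: ltgtP pq => // -> _; rewrite subrr.
Qed.

Lemma mu_itv_fin p q : (mu `[p, q] < +oo)%E.
Proof.
have [pq|qp] := leP p q; first by rewrite mu_itv // ltry.
by rewrite set_itv_ge ?measure0 // bnd_simp -ltNge.
Qed.

Lemma Rint_cst (p q c : R) : p <= q -> \int[mu]_(x in `[p, q]) c = c * (q - p).
Proof.
move=> pq; rewrite Rintegral_cst //; congr (_ * _).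
rewrite -[RHS]/(fine ((q - p)%:E)); congr fine; exact: mu_itv pq.
Qed.

End Int.
Section FTC.
Variable R : realType.
Local Notation mu := (@lebesgue_measure R).
Variable th : R -> R.
Hypothesis hth : convex_fun th.

Lemma bnd_int (p q : R) (f : R -> R) (m M : R) : measurable_fun `[p, q] f ->
  (forall x, p <= x <= q -> m <= f x <= M) -> mu.-integrable `[p, q] (EFin \o f).
Proof.
move=> mf H; apply: measurable_bounded_integrable => //.
  exact: mu_itv_fin.
have B := @bnd_of R f `[p, q] m M.
have B1 : forall x, [set` `[p, q]] x -> m <= f x <= M by move=> x; rewrite /= in_itv /=; exact: H.
exact: (B B1).
Qed.

Lemma L_meas : measurable_fun setT (lderiv th).
Proof. by apply: measurable_realfun.nondecreasing_measurable => // u v; exact: lderiv_mono. Qed.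

Lemma L_int (p q : R) : mu.-integrable `[p, q] (EFin \o lderiv th).
Proof.
apply: (@bnd_int _ _ _ (lderiv th p) (lderiv th q)).
  exact: measurable_funS L_meas.
by move=> x /andP[px xq]; rewrite !lderiv_mono.
Qed.

Lemma cst_int (p q c : R) : mu.-integrable `[p, q] (EFin \o (fun=> c)).
Proof.
by apply: (@bnd_int _ _ _ c c) => // x _; rewrite lexx.
Qed.

Lemma RI_add (f : R -> R) (v w u : R) : mu.-integrable `[v, u] (EFin \o f) ->
  v <= w -> w <= u ->
  \int[mu]_(z in `[v, u]) f z = \int[mu]_(z in `[v, w]) f z + \int[mu]_(z in `[w, u]) f z.
Proof.
move=> fi vw wu.
have := @Rintegral_itvB R f (BLeft v) (BRight u) w fi.
rewrite !bnd_simp => /(_ vw wu) H.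
rewrite -(@Rintegral_itv_obnd_cbnd _ w (BRight u)); last first.
  by apply: integrableS fi => //; apply: subset_itvr; rewrite bnd_simp.
by rewrite -H addrC subrK.
Qed.

Lemma RI_bounds v w : v <= w ->
  lderiv th v * (w - v) <= \int[mu]_(z in `[v, w]) lderiv th z <= lderiv th w * (w - v).
Proof.
move=> vw; rewrite -!Rint_cst //; apply/andP; split; apply: le_Rintegral => //;
  try exact: L_int; try exact: cst_int;
  by move=> x; rewrite /= in_itv /= => /andP[? ?]; apply: lderiv_mono.
Qed.

Lemma FTC_R p q : p <= q -> \int[mu]_(z in `[p, q]) lderiv th z = th q - th p.
Proof.
move=> pq.
set RI := fun v w => \int[mu]_(z in `[v, w]) lderiv th z.
set C := (lderiv th q - lderiv th p) * (q - p).
have C0 : 0 <= C by rewrite mulr_ge0 // subr_ge0 // lderiv_mono.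
suff H : forall n : nat, (0 < n)%N ->
    `|RI p q - (th q - th p)| <= C / n%:R.
  apply/eqP; rewrite -subr_eq0 -normr_eq0 eq_le normr_ge0 andbT.
  rewrite leNgt; apply/negP => X0.
  set X := `|RI p q - (th q - th p)| in X0 H.
  have CX0 : 0 <= C / X by rewrite divr_ge0 // ltW.
  have h1 := archi_boundP CX0.
  set N := Num.Def.archi_bound (C / X) in h1.
  have h2 : N%:R < N.+1%:R :> R by rewrite ltr_nat.
  have := H N.+1 isT; rewrite ler_pdivlMr ?ltr0n //.
  move: h1; rewrite ltr_pdivrMr //; lra.
move=> n n0.
have n0' : 0 < n%:R :> R by rewrite ltr0n.
set d := (q - p) / n%:R.
have d0 : 0 <= d by rewrite divr_ge0 // subr_ge0.
have step : forall k : nat, `|RI p (p + k%:R * d) - (th (p + k%:R * d) - th p)| <=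
    (lderiv th (p + k%:R * d) - lderiv th p) * d.
  elim=> [|k IH].
    by rewrite mul0r addr0 /RI set_itv1 Rintegral_set1 !subrr normr0 mul0r.
  set v := p + k%:R * d.
  have -> : p + k.+1%:R * d = v + d by rewrite /v -addn1 natrD mulrDl mul1r addrA.
  have pv : p <= v by rewrite /v lerDl mulr_ge0.
  have vd : v <= v + d by rewrite lerDl.
  have Hadd : RI p (v + d) = RI p v + RI v (v + d).
    by apply: RI_add; [exact: L_int | exact: pv | exact: vd].
  have /andP[b1 b2] := @RI_bounds _ _ vd.
  have /andP[c1 c2] := @lderiv_diff _ _ hth _ _ vd.
  have m1 : lderiv th p <= lderiv th v by apply: lderiv_mono.
  have m2 : lderiv th v <= lderiv th (v + d) by apply: lderiv_mono.
  rewrite addrAC subrr add0r in b1 b2 c1 c2.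
  rewrite Hadd; move: IH; rewrite -/v /RI !ler_norml => /andP[i1 i2].
  apply/andP; split; nra.
have := step n; have -> : p + n%:R * d = q.
  by rewrite /d; field; rewrite gt_eqF.
by rewrite mulrA.
Qed.

Lemma FTC_E p q : p <= q ->
  (\int[mu]_(z in `[p, q]) (lderiv th z)%:E = (th q - th p)%:E)%E.
Proof.
move=> pq; rewrite -(@FTC_R p q pq) /Rintegral fineK //.
apply: integrable_fin_num => //; exact: L_int.
Qed.

End FTC.
Section Key.
Variable R : realType.
Local Notation mu := (@lebesgue_measure R).
Variable th : R -> R.
Hypothesis hth : convex_fun th.

Lemma convex_shift x : convex_fun (fun z => th (z - x)).
Proof.
move=> u w t t0 t1 /=.
have -> : t * u + (1 - t) * w - x = t * (u - x) + (1 - t) * (w - x) by ring.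
exact: hth.
Qed.

Lemma lderiv_shift x z : lderiv (fun y => th (y - x)) z = lderiv th (z - x).
Proof.
rewrite /lderiv; cbv beta.
have -> : (fun h => (th (z - x) - th (z - h - x)) / h) =
  (fun h => (th (z - x) - th (z - x - h)) / h).
  by apply: funext => h; rewrite [z - h - x]addrAC.
by [].
Qed.

Lemma FTC_shift x p q : p <= q ->
  (\int[mu]_(z in `[p, q]) (lderiv th (z - x))%:E = (th (q - x) - th (p - x))%:E)%E.
Proof.
move=> pq; rewrite -(@FTC_E _ _ (convex_shift x) _ _ pq).
by apply: eq_integral => z _; rewrite lderiv_shift.
Qed.

Lemma le_int_meas (D : set R) (f k : R -> R) : measurable D ->
  measurable_fun D f -> measurable_fun D k -> (forall z, D z -> k z <= f z) ->
  (\int[mu]_(z in D) (k z)%:E <= \int[mu]_(z in D) (f z)%:E)%E.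
Proof.
move=> mD mf mk kf; rewrite [leLHS]integralE [leRHS]integralE; apply: leeB.
- apply: ge0_le_integral => //.
  + exact/measurable_realfun.measurable_funepos/measurable_realfun.measurable_EFinP.
  + exact/measurable_realfun.measurable_funepos/measurable_realfun.measurable_EFinP.
  + move=> z Dz; apply: (@funepos_le _ _ D) => //; first by move=> y /set_mem Dy; rewrite lee_fin kf.
    exact: mem_set.
- apply: ge0_le_integral => //.
  + exact/measurable_realfun.measurable_funeneg/measurable_realfun.measurable_EFinP.
  + exact/measurable_realfun.measurable_funeneg/measurable_realfun.measurable_EFinP.
  + move=> z Dz; apply: (@funeneg_le _ _ D) => //; first by move=> y /set_mem Dy; rewrite lee_fin kf.
    exact: mem_set.
Qed.

Lemma oo_cc (p q : R) (f : R -> R) : measurable_fun `[p, q] f ->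
  (\int[mu]_(z in `[p, q]) (f z)%:E = \int[mu]_(z in `]p, q[) (f z)%:E)%E.
Proof.
move=> mf; apply: (@integral_itv_bndoo R p q (fun z => (f z)%:E) true false).
apply/measurable_realfun.measurable_EFinP; apply: measurable_funS mf => //.
exact: subset_itv_oo_cc.
Qed.

Lemma mL_shift (D : set R) x : measurable_fun D (fun z => lderiv th (z - x)).
Proof.
apply: measurableT_comp; first exact: L_meas.
by apply: measurable_realfun.measurable_funB => //; exact: measurable_id.
Qed.

Lemma key_lo (p q x : R) (f : R -> R) : p <= q -> measurable_fun `[p, q] f ->
  (forall z, p < z < q -> lderiv th (z - x) <= f z) ->
  ((th (q - x) - th (p - x))%:E <= \int[mu]_(z in `[p, q]) (f z)%:E)%E.
Proof.
move=> pq mf H; rewrite -FTC_shift // (@oo_cc p q _ (mL_shift _ x)) (@oo_cc p q _ mf).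
apply: le_int_meas => //;
  solve [exact: mL_shift | by apply: measurable_funS mf => //; exact: subset_itv_oo_cc].
Qed.

Lemma key_up (p q x : R) (f : R -> R) : p <= q -> measurable_fun `[p, q] f ->
  (forall z, p < z < q -> f z <= lderiv th (z - x)) ->
  (\int[mu]_(z in `[p, q]) (f z)%:E <= (th (q - x) - th (p - x))%:E)%E.
Proof.
move=> pq mf H; rewrite -FTC_shift // (@oo_cc p q _ (mL_shift _ x)) (@oo_cc p q _ mf).
apply: le_int_meas => //;
  solve [exact: mL_shift | by apply: measurable_funS mf => //; exact: subset_itv_oo_cc].
Qed.

End Key.
Lemma finE {R : realType} {x : \bar R} : x \is a fin_num -> exists r, x = r%:E.
Proof. by move=> /fineK <-; eexists. Qed.

Ltac efold := rewrite -?EFinD -?EFinN -?EFinD -?EFinN -?EFinD -?EFinN -?EFinD ?lee_fin.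
Ltac ecl := move=> *; first [by apply: leNye | by apply: leey |
  (repeat match goal with H : is_true (_ <= _)%E |- _ => rewrite lee_fin in H end); efold; lra].

Definition Fof {R : realType} (J : R -> R -> \bar R) (y0 y : R) : \bar R :=
  if y0 <= y then J y0 y else (- J y y0)%E.

Lemma FofN {R : realType} (J : R -> R -> \bar R) y0 y :
  Fof (fun p q => - J p q)%E y0 y = (- Fof J y0 y)%E.
Proof. by rewrite /Fof; case: ifP. Qed.

Section Core.
Variable R : realType.
Variables (J : R -> R -> \bar R) (h : R -> R) (a b y0 y' : R).
Hypotheses (ay0 : a < y0) (y0b : y0 < b) (ay' : a <= y') (y'b : y' <= b).
Hypothesis J0 : J y0 y0 = 0%E.
Hypothesis Jfin : forall p q, a < p -> p <= q -> q < b -> J p q \is a fin_num.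
Hypothesis Jadd : forall p q r, a <= p -> p <= q -> q <= r -> r <= b ->
  J p q \is a fin_num \/ J q r \is a fin_num -> J p r = (J p q + J q r)%E.
Hypothesis Jlo : forall p q, a <= p -> p < q -> q <= y' -> ((h q - h p)%:E <= J p q)%E.
Hypothesis Jup : forall p q, y' <= p -> p < q -> q <= b -> (J p q <= (h q - h p)%:E)%E.

Let F := Fof J y0.

Let F_ge {y : R} : y0 <= y -> F y = J y0 y.
Proof. by rewrite /F /Fof => ->. Qed.

Let F_le {y : R} : y <= y0 -> F y = (- J y y0)%E.
Proof.
rewrite /F /Fof; case: ifP => // H1 H2.
have -> : y = y0 by apply/le_anti/andP.
by rewrite J0 oppe0.
Qed.

Lemma core y : a <= y -> y <= b -> (- F y' + (h y')%:E <= - F y + (h y)%:E)%E.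
Proof.
move=> ay yb.
have [yy'|y'y|->] := ltgtP y y'; last by [].
- have yb' : y < b by apply: lt_le_trans yy' y'b.
  have ay'' : a < y' by apply: le_lt_trans ay yy'.
  have [y0y|yy0] := leP y0 y.
  + have fA := Jfin _ _ ay0 y0y yb'.
    have E := Jadd _ _ _ (ltW ay0) y0y (ltW yy') y'b (or_introl fA).
    have lo := Jlo _ _ ay yy' (lexx y').
    rewrite (F_ge (le_trans y0y (ltW yy'))) (F_ge y0y) E.
    have [A ->] := finE fA.
    move: lo; case: (J y y') => [B| |] //=; ecl.
  + have [y'y0|y0y'] := leP y' y0.
    * have fA := Jfin _ _ ay'' y'y0 y0b.
      have E := Jadd _ _ _ ay (ltW yy') y'y0 (ltW y0b) (or_intror fA).
      have lo := Jlo _ _ ay yy' (lexx y').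
      rewrite (F_le y'y0) (F_le (ltW yy0)) E.
      have [A ->] := finE fA.
      move: lo; case: (J y y') => [B| |] //=; ecl.
    * have lo1 := Jlo _ _ ay yy0 (ltW y0y').
      have lo2 := Jlo _ _ (ltW ay0) y0y' (lexx y').
      rewrite (F_ge (ltW y0y')) (F_le (ltW yy0)).
      move: lo1 lo2; case: (J y y0) => [A| |]; case: (J y0 y') => [B| |] //=;
        ecl.
- have ay'' : a < y by apply: le_lt_trans ay' y'y.
  have [yy0|y0y] := leP y y0.
  + have fA := Jfin _ _ ay'' yy0 y0b.
    have E := Jadd _ _ _ ay' (ltW y'y) yy0 (ltW y0b) (or_intror fA).
    have up := Jup _ _ (lexx y') y'y yb.
    rewrite (F_le (ltW (lt_le_trans y'y yy0))) (F_le yy0) E.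
    have [A ->] := finE fA.
    move: up; case: (J y' y) => [B| |] //=; ecl.
  + have [y0y'|y'y0] := leP y0 y'.
    * have fA := Jfin _ _ ay0 y0y' (lt_le_trans y'y yb).
      have E := Jadd _ _ _ (ltW ay0) y0y' (ltW y'y) yb (or_introl fA).
      have up := Jup _ _ (lexx y') y'y yb.
      rewrite (F_ge y0y') (F_ge (ltW y0y)) E.
      have [A ->] := finE fA.
      move: up; case: (J y' y) => [B| |] //=; ecl.
    * have up1 := Jup _ _ (lexx y') y'y0 (ltW y0b).
      have up2 := Jup _ _ (ltW y'y0) y0y yb.
      rewrite (F_le (ltW y'y0)) (F_ge (ltW y0y)).
      move: up1 up2; case: (J y' y0) => [A| |]; case: (J y0 y) => [B| |] //=;
        ecl.
Qed.

End Core.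

Lemma core_sup (R : realType) (J : R -> R -> \bar R) (h : R -> R) (a b y0 y' : R) :
  a < y0 -> y0 < b -> a <= y' -> y' <= b ->
  J y0 y0 = 0%E ->
  (forall p q, a < p -> p <= q -> q < b -> J p q \is a fin_num) ->
  (forall p q r, a <= p -> p <= q -> q <= r -> r <= b ->
    J p q \is a fin_num \/ J q r \is a fin_num -> J p r = (J p q + J q r)%E) ->
  (forall p q, a <= p -> p < q -> q <= y' -> (J p q <= (h q - h p)%:E)%E) ->
  (forall p q, y' <= p -> p < q -> q <= b -> ((h q - h p)%:E <= J p q)%E) ->
  forall y, a <= y -> y <= b ->
  (- Fof J y0 y + (h y)%:E <= - Fof J y0 y' + (h y')%:E)%E.
Proof.
move=> ay0 y0b ay' y'b J0 Jfin Jadd Jlo Jup y ay yb.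
have J0' : (- J y0 y0 = 0)%E by rewrite J0 oppe0.
have Jfin' : forall p q, a < p -> p <= q -> q < b -> (- J p q)%E \is a fin_num.
  by move=> p q ? ? ?; rewrite fin_numN; apply: Jfin.
have Jadd' : forall p q r, a <= p -> p <= q -> q <= r -> r <= b ->
    (- J p q)%E \is a fin_num \/ (- J q r)%E \is a fin_num ->
    (- J p r = (- J p q) + (- J q r))%E.
  move=> p q r ? ? ? ? Hf; rewrite (Jadd p q r) // ?oppeD //.
    by rewrite !fin_numN in Hf; case: Hf => Hf; [exact: fin_num_adde_defr | exact: fin_num_adde_defl].
  by rewrite !fin_numN in Hf.
have Jlo' : forall p q, a <= p -> p < q -> q <= y' -> ((- h q - - h p)%:E <= - J p q)%E.
  move=> p q ? ? ?; rewrite -leeN2 oppeK -EFinN.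
  have -> : - (- h q - - h p) = h q - h p by ring.
  exact: Jlo.
have Jup' : forall p q, y' <= p -> p < q -> q <= b -> (- J p q <= (- h q - - h p)%:E)%E.
  move=> p q ? ? ?; rewrite -leeN2 oppeK -EFinN.
  have -> : - (- h q - - h p) = h q - h p by ring.
  exact: Jup.
have := @core R (fun p q => - J p q)%E (fun z => - h z) a b y0 y' ay0 y0b ay' y'b
  J0' Jfin' Jadd' Jlo' Jup' y ay yb.
rewrite !FofN !oppeK => H.
rewrite -leeN2 !oppeD ?fin_num_adde_defl // !oppeK -!EFinN; exact: H.
Qed.
Section Hull.
Variable R : realType.
Variables (I : set R) (T : R -> R) (a b : R).
Hypothesis hcl : closure (co (T @` I)) = [set` `[a, b]].
Hypothesis ab : a < b.

Lemma co_sub C : convexR C -> T @` I `<=` C -> co (T @` I) `<=` C.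
Proof. by move=> cC sC y; apply; split. Qed.

Lemma sub_co : T @` I `<=` co (T @` I).
Proof. by move=> y Ay C [_ sC]; exact: sC. Qed.

Lemma Tin x : I x -> a <= T x <= b.
Proof.
move=> Ix.
have : closure (co (T @` I)) (T x) by apply: subset_closure; apply: sub_co; exists x.
by rewrite hcl /= in_itv.
Qed.

Lemma Tlow z : a < z -> exists x, I x /\ T x < z.
Proof.
move=> az; have [//|nE] := pselect (exists x, I x /\ T x < z).
exfalso.
have cC : convexR [set y | z <= y].
  move=> u w t /= zu zw t0 t1.
  have h1 : 0 <= t * (u - z) by rewrite mulr_ge0 // subr_ge0.
  have h2 : 0 <= (1 - t) * (w - z) by rewrite mulr_ge0 // subr_ge0.
  rewrite -subr_ge0; have -> : t * u + (1 - t) * w - z = t * (u - z) + (1 - t) * (w - z) by ring.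
  by rewrite addr_ge0.
have sC : T @` I `<=` [set y | z <= y].
  move=> _ [x Ix <-] /=; rewrite leNgt; apply/negP => H; apply: nE; by exists x.
have := closure_subset (co_sub _ cC sC).
rewrite hcl -(proj1 (closure_id _) (@closed_ge R z)) => /(_ a).
rewrite /= in_itv /= lexx (ltW ab) => /(_ isT) za.
by move: (lt_le_trans az za); rewrite ltxx.
Qed.

Lemma Thigh z : z < b -> exists x, I x /\ z < T x.
Proof.
move=> zb; have [//|nE] := pselect (exists x, I x /\ z < T x).
exfalso.
have cC : convexR [set y | y <= z].
  move=> u w t /= zu zw t0 t1.
  have h1 : 0 <= t * (z - u) by rewrite mulr_ge0 // subr_ge0.
  have h2 : 0 <= (1 - t) * (z - w) by rewrite mulr_ge0 // subr_ge0.
  rewrite -subr_ge0; have -> : z - (t * u + (1 - t) * w) = t * (z - u) + (1 - t) * (z - w) by ring.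
  by rewrite addr_ge0.
have sC : T @` I `<=` [set y | y <= z].
  move=> _ [x Ix <-] /=; rewrite leNgt; apply/negP => H; apply: nE; by exists x.
have := closure_subset (co_sub _ cC sC).
rewrite hcl -(proj1 (closure_id _) (@closed_le R z)) => /(_ b).
rewrite /= in_itv /= lexx (ltW ab) => /(_ isT) bz.
by move: (lt_le_trans zb bz); rewrite ltxx.
Qed.

End Hull.
Section MonoMeas.
Variable R : realType.

Lemma itv_nd_meas (S : R -> R) (a b : R) :
  {in `]a, b[ &, nondecreasing_fun S} -> measurable_fun `]a, b[ S.
Proof.
move=> ndS.
apply: (measurability (@measurable_realfun.RGenCInfty.G R)) => [|/= _ [_] [r] -> <-].
  exact: measurable_realfun.RGenCInfty.measurableE.
apply: measurable_realfun.is_interval_measurable => s t /= [sab fs] [tab ft] u /andP[su ut].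
have uab : u \in `]a, b[.
  move: sab tab; rewrite !in_itv /= => /andP[aS _] /andP[_ tb].
  by rewrite (lt_le_trans aS su) (le_lt_trans ut tb).
split => //; move: fs; rewrite /= !in_itv /= !andbT => fs.
by rewrite (le_trans fs) // ndS.
Qed.

Lemma itv_ni_meas (S : R -> R) (a b : R) :
  {in `]a, b[ &, nonincreasing_fun S} -> measurable_fun `]a, b[ S.
Proof.
move=> niS; rewrite -(opprK S); apply: measurableT_comp => //.
apply: itv_nd_meas => u v uab vab uv.
by rewrite lerN2; apply: niS.
Qed.

End MonoMeas.
Section Gen.
Variable R : realType.
Local Notation mu := (@lebesgue_measure R).
Variables (f : R -> R) (a b y0 : R).
Hypotheses (ay0 : a < y0) (y0b : y0 < b).
Hypothesis mf : measurable_fun `[a, b] f.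
Hypothesis fb : forall p q, a < p -> p <= q -> q < b ->
  exists M, 0 <= M /\ forall z, p <= z <= q -> `|f z| <= M.

Definition Jf (p q : R) := (\int[mu]_(z in `[p, q]) (f z)%:E)%E.

Lemma Jf0 p : Jf p p = 0%E.
Proof. by rewrite /Jf set_itv1 integral_set1. Qed.

Lemma mf_sub p q : a <= p -> q <= b -> measurable_fun `[p, q] f.
Proof.
move=> ap qb; apply: measurable_funS mf => //.
by apply: subset_itvScc; rewrite bnd_simp.
Qed.

Lemma int_cst_itv (u v c : R) : u <= v ->
  (\int[mu]_(z in `[u, v]) (c%:E) = (c * (v - u))%:E)%E.
Proof.
move=> uv; have := @integral_cst _ _ R mu `[u, v] (measurable_itv _) c%:E.
move=> ->; rewrite EFinM; congr (_ * _)%E; exact: mu_itv.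
Qed.

Lemma Jf_bound p q M u v : a < p -> q < b -> p <= u -> u <= v -> v <= q ->
  (forall z, p <= z <= q -> `|f z| <= M) ->
  ((- M * (v - u))%:E <= Jf u v)%E /\ (Jf u v <= (M * (v - u))%:E)%E.
Proof.
move=> ap qb pu uv vq HM.
have mfuv : measurable_fun `[u, v] f.
  apply: mf_sub; [exact: ltW (lt_le_trans ap pu) | exact: ltW (le_lt_trans vq qb)].
have Hz : forall z, [set` `[u, v]] z -> - M <= f z <= M.
  move=> z; rewrite /= in_itv /= => /andP[uz zv].
  by rewrite -ler_norml HM // (le_trans pu uz) (le_trans zv vq).
split.
- rewrite -int_cst_itv //; apply: le_int_meas => //.
  by move=> z /Hz /andP[].
- rewrite -int_cst_itv //; apply: le_int_meas => //.
  by move=> z /Hz /andP[].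
Qed.

Lemma Jf_fin p q : a < p -> p <= q -> q < b -> Jf p q \is a fin_num.
Proof.
move=> ap pq qb; have [M [M0 HM]] := fb _ _ ap pq qb.
have [h1 h2] := @Jf_bound p q M p q ap qb (lexx p) pq (lexx q) HM.
rewrite fin_numE; apply/andP; split.
  by apply/eqP => E; rewrite E in h1.
by apply/eqP => E; rewrite E in h2.
Qed.

Lemma Jf_add p q r : a <= p -> p <= q -> q <= r -> r <= b -> Jf p r = (Jf p q + Jf q r)%E.
Proof.
move=> ap pq qr rb; rewrite /Jf.
rewrite (@itv_bndbnd_setU _ _ (BLeft p) (BRight q) (BRight r)) ?bnd_simp //.
rewrite integral_setU //=.
- rewrite (@integral_itv_obnd_cbnd R q (BRight r)) //.
  apply/measurable_realfun.measurable_EFinP; apply: measurable_funS (@mf_sub q r (le_trans ap pq) rb) => //.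
  exact: subset_itv_oc_cc.
- rewrite -(@itv_bndbnd_setU _ _ (BLeft p) (BRight q) (BRight r)) ?bnd_simp //.
  by apply/measurable_realfun.measurable_EFinP; exact: mf_sub.
- rewrite disj_set2E; apply/eqP; apply/seteqP; split => z //=.
  by rewrite !in_itv /= => -[/andP[_ zq] /andP[qz _]]; move: (lt_le_trans qz zq); rewrite ltxx.
Qed.

Lemma Fof_fin y : a < y -> y < b -> Fof Jf y0 y \is a fin_num.
Proof.
move=> ay yb; rewrite /Fof; case: ifP => H; first exact: Jf_fin.
by rewrite fin_numN; apply: Jf_fin => //; rewrite ltW // ltNge H.
Qed.

Lemma Fof_cont : {within `]a, b[, continuous (Fof Jf y0)}.
Proof.
apply: continuous_in_subspaceT => y; rewrite inE /= in_itv /= => /andP[ay yb].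
have m1 : Num.min y y0 <= y by rewrite ge_min lexx.
have m2 : Num.min y y0 <= y0 by rewrite ge_min lexx orbT.
have m3 : a < Num.min y y0 by rewrite lt_min ay ay0.
have n1 : y <= Num.max y y0 by rewrite le_max lexx.
have n2 : y0 <= Num.max y y0 by rewrite le_max lexx orbT.
have n3 : Num.max y y0 < b by rewrite gt_max yb y0b.
set p := (a + Num.min y y0) / 2.
set q := (b + Num.max y y0) / 2.
have ap : a < p by rewrite /p; lra.
have py : p < y by rewrite /p; lra.
have py0 : p < y0 by rewrite /p; lra.
have yq : y < q by rewrite /q; lra.
have y0q : y0 < q by rewrite /q; lra.
have qb : q < b by rewrite /q; lra.
have pq : p <= q by lra.
have [M [M0 HM]] := fb _ _ ap pq qb.
set K := fun z => fine (Jf p z).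
have KE : forall z, p <= z <= q -> Fof Jf y0 z = (K z - K y0)%:E.
  move=> z /andP[pz zq].
  have fy0 := Jf_fin _ _ ap (ltW py0) (lt_trans y0q qb).
  have [A eA] := finE fy0.
  rewrite /Fof /K; case: ifP => H.
    have E := Jf_add _ _ _ (ltW ap) (ltW py0) H (ltW (le_lt_trans zq qb)).
    have fB := Jf_fin _ _ ay0 H (le_lt_trans zq qb).
    have [B eB] := finE fB.
    by rewrite E eA eB -EFinD /=; congr EFin; ring.
  have zy0 : z <= y0 by rewrite ltW // ltNge H.
  have E := Jf_add _ _ _ (ltW ap) pz zy0 (ltW y0b).
  have fB := Jf_fin _ _ (lt_le_trans ap pz) zy0 y0b.
  have [B eB] := finE fB.
  have fC := Jf_fin _ _ ap pz (le_lt_trans zq qb).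
  have [C eC] := finE fC.
  move: E; rewrite eA eB eC -EFinD => /eqP; rewrite eqe => /eqP ->.
  by rewrite /=; congr EFin; ring.
have Klip : forall u v, p <= u -> u <= v -> v <= q -> `|K v - K u| <= M * (v - u).
  move=> u v pu uv vq.
  have E := Jf_add _ _ _ (ltW ap) pu uv (ltW (le_lt_trans vq qb)).
  have [h1 h2] := @Jf_bound p q M u v ap qb pu uv vq HM.
  have [A eA] := finE (Jf_fin _ _ ap pu (le_lt_trans uv (le_lt_trans vq qb))).
  have [B eB] := finE (Jf_fin _ _ (lt_le_trans ap pu) uv (le_lt_trans vq qb)).
  rewrite /K E eA eB -EFinD /=.
  rewrite eB !lee_fin in h1 h2.
  rewrite ler_norml; apply/andP; split; lra.
have Kl2 : forall z, p <= z <= q -> `|K y - K z| <= M * `|y - z|.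
  move=> z /andP[pz zq]; have [yz|zy] := leP y z.
    rewrite distrC (distrC y z) [`|z - y|]ger0_norm ?subr_ge0 //.
    exact: (Klip y z (ltW py) yz zq).
  rewrite [`|y - z|]ger0_norm; last by rewrite subr_ge0 ltW.
  exact: (Klip z y pz (ltW zy) (ltW yq)).
rewrite /continuous_at (KE y); last by rewrite !ltW.
apply: cvg_EFin.
  apply/nbhs_ballP; exists (Num.min (y - p) (q - y)) => [|z] /=.
    by rewrite lt_min !subr_gt0 py yq.
  rewrite lt_min => /andP[h1 h2].
  have : `|y - z| >= y - z by rewrite ler_norm.
  have : `|y - z| >= z - y by rewrite -normrN opprB ler_norm.
  move=> *; rewrite KE //; apply/andP; split; lra.
apply/cvgrPdist_le => e e0.
apply/nbhs_ballP; exists (Num.min (e / (M + 1)) (Num.min (y - p) (q - y))) => [|z] /=.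
  by rewrite !lt_min !subr_gt0 py yq divr_gt0 // ltr_wpDl.
rewrite !lt_min => /andP[h0 /andP[h1 h2]].
have : `|y - z| >= y - z by rewrite ler_norm.
have : `|y - z| >= z - y by rewrite -normrN opprB ler_norm.
move=> nz1 nz2.
have pzq : p <= z <= q by apply/andP; split; lra.
rewrite KE //= opprB addrA subrK.
have := Kl2 z pzq.
have : M * `|y - z| <= M * (e / (M + 1)) by rewrite ler_wpM2l // ltW.
have : M * (e / (M + 1)) <= e.
  rewrite mulrA ler_pdivrMr ?ltr_wpDl //; nra.
move=> *; lra.
Qed.

End Gen.
Section SlowSec.
Variable R : realType.
Variables (I : set R) (T : R -> R) (a b : R).
Hypothesis hcl : closure (co (T @` I)) = [set` `[a, b]].
Hypothesis ab : a < b.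
Hypothesis hT : {in I &, {homo T : x y / x <= y}}.

Lemma Slow_lb z : a < z -> has_lbound [set x | I x /\ z <= T x].
Proof.
move=> az; have [x0 [Ix0 Tx0]] := @Tlow _ _ _ _ _ hcl ab _ az.
exists x0 => x [Ix zx]; rewrite leNgt; apply/negP => xx0.
have := hT _ _ (mem_set Ix) (mem_set Ix0) (ltW xx0).
move=> H; have := lt_le_trans Tx0 (le_trans zx H); by rewrite ltxx.
Qed.

Lemma Slow_le z x : a < z -> I x -> z <= T x -> Slow I T z <= x.
Proof. by move=> az Ix zx; rewrite /Slow; apply: (ge_inf (@Slow_lb z az)). Qed.

Lemma Slow_ge z m : z < b -> (forall x, I x -> z <= T x -> m <= x) -> m <= Slow I T z.
Proof.
move=> zb H; rewrite /Slow; apply: lb_le_inf.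
  by have [x [Ix zx]] := @Thigh _ _ _ _ _ hcl ab _ zb; exists x; split => //; rewrite ltW.
by move=> x [Ix zx]; apply: H.
Qed.

Lemma Slow_mono z1 z2 : a < z1 -> z1 <= z2 -> z2 < b -> Slow I T z1 <= Slow I T z2.
Proof.
move=> az1 z12 z2b; apply: Slow_ge => // x Ix zx.
by apply: Slow_le => //; apply: le_trans z12 zx.
Qed.

Lemma Slow_bnd p q : a < p -> p <= q -> q < b ->
  exists m M, forall z, p <= z <= q -> m <= Slow I T z <= M.
Proof.
move=> ap pq qb; exists (Slow I T p), (Slow I T q) => z /andP[pz zq].
by rewrite !Slow_mono // ?(lt_le_trans ap pz) ?(le_lt_trans zq qb).
Qed.

Lemma Slow_meas : measurable_fun `]a, b[ (Slow I T).
Proof.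
apply: itv_nd_meas => u v; rewrite !in_itv /= => /andP[au ub] /andP[av vb] uv.
exact: Slow_mono.
Qed.

End SlowSec.

Section ShighSec.
Variable R : realType.
Variables (I : set R) (T : R -> R) (a b : R).
Hypothesis hcl : closure (co (T @` I)) = [set` `[a, b]].
Hypothesis ab : a < b.
Hypothesis hT : {in I &, {homo T : x y /~ x <= y}}.

Lemma Shigh_ub z : a < z -> has_ubound [set x | I x /\ z <= T x].
Proof.
move=> az; have [x0 [Ix0 Tx0]] := @Tlow _ _ _ _ _ hcl ab _ az.
exists x0 => x [Ix zx]; rewrite leNgt; apply/negP => xx0.
have := hT _ _ (mem_set Ix) (mem_set Ix0) (ltW xx0).
move=> H; have := lt_le_trans Tx0 (le_trans zx H); by rewrite ltxx.
Qed.

Lemma Shigh_ge z x : a < z -> I x -> z <= T x -> x <= Shigh I T z.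
Proof. by move=> az Ix zx; rewrite /Shigh; apply: (ub_le_sup (@Shigh_ub z az)). Qed.

Lemma Shigh_le z m : z < b -> (forall x, I x -> z <= T x -> x <= m) -> Shigh I T z <= m.
Proof.
move=> zb H; rewrite /Shigh; apply: ge_sup.
  by have [x [Ix zx]] := @Thigh _ _ _ _ _ hcl ab _ zb; exists x; split => //; rewrite ltW.
by move=> x [Ix zx]; apply: H.
Qed.

Lemma Shigh_anti z1 z2 : a < z1 -> z1 <= z2 -> z2 < b -> Shigh I T z2 <= Shigh I T z1.
Proof.
move=> az1 z12 z2b; apply: Shigh_le => // x Ix zx.
by apply: Shigh_ge => //; apply: le_trans z12 zx.
Qed.

Lemma Shigh_bnd p q : a < p -> p <= q -> q < b ->
  exists m M, forall z, p <= z <= q -> m <= Shigh I T z <= M.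
Proof.
move=> ap pq qb; exists (Shigh I T q), (Shigh I T p) => z /andP[pz zq].
by rewrite !Shigh_anti // ?(lt_le_trans ap pz) ?(le_lt_trans zq qb).
Qed.

Lemma Shigh_meas : measurable_fun `]a, b[ (Shigh I T).
Proof.
apply: itv_ni_meas => u v; rewrite !in_itv /= => /andP[au ub] /andP[av vb] uv.
exact: Shigh_anti.
Qed.

End ShighSec.
Section Inst.
Variable R : realType.
Variable th : R -> R.
Hypothesis hth : convex_fun th.
Variables (a b : R) (S : R -> R).
Hypothesis ab : a < b.
Hypothesis HSm : measurable_fun `]a, b[ S.
Hypothesis HSb : forall p q, a < p -> p <= q -> q < b ->
  exists m M, forall z, p <= z <= q -> m <= S z <= M.

Lemma f_meas : measurable_fun `[a, b] (fun z => lderiv th (z - S z)).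
Proof.
have mo : measurable_fun `]a, b[ (fun z => lderiv th (z - S z)).
  apply: (measurableT_comp (@L_meas _ _ hth)).
  by apply: measurable_realfun.measurable_funB => //; exact: measurable_id.
rewrite -(@setU1itv _ _ (BRight b) a false); last by rewrite bnd_simp ltW.
rewrite -(@setUitv1 _ _ (BRight a) b true); last by rewrite bnd_simp.
apply/measurable_funU => //; first exact: measurableU.
split; first exact: measurable_fun_set1.
by apply/measurable_funU => //; split => //; exact: measurable_fun_set1.
Qed.

Lemma f_bnd p q : a < p -> p <= q -> q < b ->
  exists M, 0 <= M /\ forall z, p <= z <= q -> `|lderiv th (z - S z)| <= M.
Proof.
move=> ap pq qb; have [m [M HmM]] := HSb _ _ ap pq qb.
exists (`|lderiv th (p - M)| + `|lderiv th (q - m)|); split.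
  by rewrite addr_ge0.
move=> z /andP[pz zq]; have /andP[mz zM] := HmM z (introT andP (conj pz zq)).
have h1 : lderiv th (p - M) <= lderiv th (z - S z).
  by apply: (@lderiv_mono _ _ hth); rewrite lerB.
have h2 : lderiv th (z - S z) <= lderiv th (q - m).
  by apply: (@lderiv_mono _ _ hth); rewrite lerB.
have n1 := ler_norm (lderiv th (q - m)).
have n2 := ler_norm (- lderiv th (p - M)); rewrite normrN in n2.
have := normr_ge0 (lderiv th (p - M)); have := normr_ge0 (lderiv th (q - m)).
rewrite ler_norml; move=> *; apply/andP; split; lra.
Qed.

End Inst.
Theorem lemma3p14 (R : realType) (th : R -> R) (I : set R) (T : R -> R)
    (a b y0 : R) :
  convex_fun th ->
  closure (co (T @` I)) = [set` `[a, b]] ->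
  a < y0 < b ->
  (* (a) nondecreasing case *)
  ({in I &, {homo T : x y / x <= y}} ->
     let psi_ := psi th (Slow I T) y0 in
     (forall y, a < y < b -> psi_ y \is a fin_num) /\
     {within [set` `]a, b[], continuous psi_} /\
     (forall x y', I x -> (Tleft I T x <= y'%:E)%E -> y' <= T x -> a <= y' <= b ->
        (- psi_ y' + (th (y' - x))%:E)%E =
        ereal_inf [set (- psi_ y + (th (y - x))%:E)%E | y in [set` `[a, b]]])) /\
  (* (b) nonincreasing case *)
  ({in I &, {homo T : x y /~ x <= y}} ->
     let psi_ := psi th (Shigh I T) y0 in
     (forall y, a < y < b -> psi_ y \is a fin_num) /\
     {within [set` `]a, b[], continuous psi_} /\
     (forall x y', I x -> (Tright I T x <= y'%:E)%E -> y' <= T x -> a <= y' <= b ->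
        (- psi_ y' + (th (y' - x))%:E)%E =
        ereal_sup [set (- psi_ y + (th (y - x))%:E)%E | y in [set` `[a, b]]])).
Proof.
move=> hth hcl /andP[ay0 y0b].
have ab : a < b by apply: lt_trans ay0 y0b.
split.
- move=> hT psi_.
  set f := fun z => lderiv th (z - Slow I T z).
  have mS := @Slow_meas _ _ _ _ _ hcl ab hT.
  have bS := @Slow_bnd _ _ _ _ _ hcl ab hT.
  have mf : measurable_fun `[a, b] f := @f_meas R th hth a b _ ab mS.
  have fb : forall p q, a < p -> p <= q -> q < b ->
      exists M, 0 <= M /\ forall z, p <= z <= q -> `|f z| <= M.
    by move=> p q ap pq qb; exact: (@f_bnd R th hth a b _ bS p q ap pq qb).
  have psiE : psi_ = Fof (Jf R f) y0 by [].
  split; [|split].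
  + by move=> y /andP[ay yb]; rewrite psiE; exact: (@Fof_fin R f a b y0 ay0 y0b mf fb y ay yb).
  + by rewrite psiE; exact: (@Fof_cont R f a b y0 ay0 y0b mf fb).
  + move=> x y' Ix Tl y'T /andP[ay' y'b].
    have sign_lo : forall z, a < z < y' -> lderiv th (z - x) <= f z.
      move=> z /andP[az zy']; apply: (@lderiv_mono _ _ hth).
      rewrite lerD2l lerN2; apply: (@Slow_le R I T a b hcl ab hT z x az Ix).
      by apply: le_trans (ltW zy') y'T.
    have sign_up : forall z, y' < z < b -> f z <= lderiv th (z - x).
      move=> z /andP[y'z zb]; apply: (@lderiv_mono _ _ hth).
      rewrite lerD2l lerN2; apply: (@Slow_ge R I T a b hcl ab z x zb) => x' Ix' zx'.
      rewrite leNgt; apply/negP => x'x.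
      have H : ((T x')%:E <= Tleft I T x)%E by apply: ereal_sup_ubound; exists x'.
      have := le_trans H Tl; rewrite lee_fin => H2.
      by have := lt_le_trans (le_lt_trans H2 y'z) zx'; rewrite ltxx.
    apply/eqP; rewrite eq_le; apply/andP; split.
    * apply: le_ereal_inf_tmp => _ [y /= yab <-]; rewrite in_itv /= in yab.
      case/andP: yab => ay yb; rewrite psiE.
      apply: (@core R (Jf R f) (fun z => th (z - x)) a b y0 y') => //.
      - exact: Jf0.
      - by move=> p q ap pq qb; exact: (@Jf_fin R f a b mf fb p q ap pq qb).
      - by move=> p q r ap pq qr rb _; exact: (@Jf_add R f a b mf p q r ap pq qr rb).
      - move=> p q ap pq qy'; apply: (@key_lo R th hth p q x f); first exact: ltW.
          by apply: measurable_funS mf => //; apply: subset_itvScc; rewrite bnd_simp; lra.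
        move=> z /andP[pz zq]; apply: sign_lo; rewrite (le_lt_trans ap pz) /=.
        exact: lt_le_trans zq qy'.
      - move=> p q y'p pq qb; apply: (@key_up R th hth p q x f); first exact: ltW.
          by apply: measurable_funS mf => //; apply: subset_itvScc; rewrite bnd_simp; lra.
        move=> z /andP[pz zq]; apply: sign_up; rewrite (le_lt_trans y'p pz) /=.
        exact: lt_le_trans zq qb.
    * by apply: ereal_inf_lbound; exists y' => //=; rewrite in_itv /= ay' y'b.
- move=> hT psi_.
  set f := fun z => lderiv th (z - Shigh I T z).
  have mS := @Shigh_meas _ _ _ _ _ hcl ab hT.
  have bS := @Shigh_bnd _ _ _ _ _ hcl ab hT.
  have mf : measurable_fun `[a, b] f := @f_meas R th hth a b _ ab mS.
  have fb : forall p q, a < p -> p <= q -> q < b ->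
      exists M, 0 <= M /\ forall z, p <= z <= q -> `|f z| <= M.
    by move=> p q ap pq qb; exact: (@f_bnd R th hth a b _ bS p q ap pq qb).
  have psiE : psi_ = Fof (Jf R f) y0 by [].
  split; [|split].
  + by move=> y /andP[ay yb]; rewrite psiE; exact: (@Fof_fin R f a b y0 ay0 y0b mf fb y ay yb).
  + by rewrite psiE; exact: (@Fof_cont R f a b y0 ay0 y0b mf fb).
  + move=> x y' Ix Tr y'T /andP[ay' y'b].
    have sign_lo : forall z, a < z < y' -> f z <= lderiv th (z - x).
      move=> z /andP[az zy']; apply: (@lderiv_mono _ _ hth).
      rewrite lerD2l lerN2; apply: (@Shigh_ge R I T a b hcl ab hT z x az Ix).
      by apply: le_trans (ltW zy') y'T.
    have sign_up : forall z, y' < z < b -> lderiv th (z - x) <= f z.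
      move=> z /andP[y'z zb]; apply: (@lderiv_mono _ _ hth).
      rewrite lerD2l lerN2; apply: (@Shigh_le R I T a b hcl ab z x zb) => x' Ix' zx'.
      rewrite leNgt; apply/negP => xx'.
      have H : ((T x')%:E <= Tright I T x)%E by apply: ereal_sup_ubound; exists x'.
      have := le_trans H Tr; rewrite lee_fin => H2.
      by have := lt_le_trans (le_lt_trans H2 y'z) zx'; rewrite ltxx.
    apply/eqP; rewrite eq_le; apply/andP; split.
    * by apply: ereal_sup_ubound; exists y' => //=; rewrite in_itv /= ay' y'b.
    * apply: ge_ereal_sup => _ [y /= yab <-]; rewrite in_itv /= in yab.
      case/andP: yab => ay yb; rewrite psiE.
      apply: (@core_sup R (Jf R f) (fun z => th (z - x)) a b y0 y') => //.
      - exact: Jf0.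
      - by move=> p q ap pq qb; exact: (@Jf_fin R f a b mf fb p q ap pq qb).
      - by move=> p q r ap pq qr rb _; exact: (@Jf_add R f a b mf p q r ap pq qr rb).
      - move=> p q ap pq qy'; apply: (@key_up R th hth p q x f); first exact: ltW.
          by apply: measurable_funS mf => //; apply: subset_itvScc; rewrite bnd_simp; lra.
        move=> z /andP[pz zq]; apply: sign_lo; rewrite (le_lt_trans ap pz) /=.
        exact: lt_le_trans zq qy'.
      - move=> p q y'p pq qb; apply: (@key_lo R th hth p q x f); first exact: ltW.
          by apply: measurable_funS mf => //; apply: subset_itvScc; rewrite bnd_simp; lra.
        move=> z /andP[pz zq]; apply: sign_up; rewrite (le_lt_trans y'p pz) /=.
        exact: lt_le_trans zq qb.
Qed.
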